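(* Let $\mathfrak{t},\mathfrak{w}$ be sesquilinear forms on $\mathbb{C}^n$ with $\mathfrak{w}\geq 0$. (i) The following statements are equivalent: (a) $\mathfrak{t}$ is $\mathfrak{w}$-left bounded; (b) $\mathfrak{t}$ is $\mathfrak{w}$-left regular; (c) $\ker(\mathfrak{w})\subseteq \ker(\mathfrak{t})$. (ii) $\mathfrak{t}$ is $\mathfrak{w}$-left strongly singular if and only if $\ker(\mathfrak{w})+\ker(\mathfrak{t})=\mathbb{C}^n$.
   Context: A sesquilinear form $\mathfrak{t}$ on a complex vector space $\mathcal{D}$ is linear in the first and anti-linear in the second component; $\mathfrak{t}[f]:=\mathfrak{t}(f,f)$, and $\mathfrak{t}\geq 0$ means $\mathfrak{t}[f]\geq 0$ for all $f$. $\ker(\mathfrak{t}):=\{f\in\mathcal{D}:\mathfrak{t}(f,g)=0\ \forall g\in\mathcal{D}\}$. For a non-negative form $\mathfrak{w}$, a non-negative form $\mathfrak{u}$ is $\mathfrak{w}$-absolutely continuous ($\mathfrak{u}\ll\mathfrak{w}$) if $\mathfrak{w}[f_n]\to 0$ and $\mathfrak{u}[f_n-f_m]\to 0$ imply $\mathfrak{u}[f_n]\to 0$; it is $\mathfrak{w}$-singular ($\mathfrak{u}\perp\mathfrak{w}$) if for every $f\in\mathcal{D}$ there is a sequence $\{f_n\}\subset\mathcal{D}$ with $\mathfrak{w}[f_n]\to 0$ and $\mathfrak{u}[f-f_n]\to 0$. $M_l(\mathfrak{t})$ denotes the set of non-negative forms $\mathfrak{s}_1$ on $\mathcal{D}$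 for which there is a non-negative form $\mathfrak{s}_2$ on $\mathcal{D}$ with $|\mathfrak{t}(f,g)|\leq \mathfrak{s}_1[f]^{1/2}\mathfrak{s}_2[g]^{1/2}$ for all $f,g\in\mathcal{D}$. $\mathfrak{t}$ is called $\mathfrak{w}$-left regular if some $\mathfrak{s}_1\in M_l(\mathfrak{t})$ satisfies $\mathfrak{s}_1\ll\mathfrak{w}$; $\mathfrak{w}$-left strongly singular if some $\mathfrak{s}_1\in M_l(\mathfrak{t})$ satisfies $\mathfrak{s}_1\perp\mathfrak{w}$; $\mathfrak{w}$-left bounded if $C\mathfrak{w}\in M_l(\mathfrak{t})$ for some $C>0$. Here $\mathcal{D}=\mathbb{C}^n$. *)

(* Defs.v *)
(* C^n = 'cV[R[i]]_n with R : realType (R[i] = complex numbers over the reals). *)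
From mathcomp Require Import all_boot all_algebra.
From mathcomp Require Import reals complex.
Set Implicit Arguments. Unset Strict Implicit. Unset Printing Implicit Defensive.
Import GRing.Theory Num.Theory.
Local Open Scope ring_scope.
Local Open Scope complex_scope.

Section Forms.
Variables (R : realType) (n : nat).

Definition svec := 'cV[R[i]]_n.
Definition sform := svec -> svec -> R[i].

Definition sesquilinear (t : sform) : Prop :=
  (forall (a : R[i]) (x y z : svec), t (a *: x + y) z = a * t x z + t y z) /\
  (forall (a : R[i]) (x y z : svec), t x (a *: y + z) = a^* * t x y + t x z).

(* t >= 0 : t[f] >= 0 for all f (in R[i], 0 <= z means z is a nonnegative real) *)
Definition nonneg_form (t : sform) : Prop := forall f : svec, 0 <= t f f.

Definition in_ker (t : sform) (f : svec) : Prop := forall g : svec, t f g = 0.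

Definition cvg0 (u : nat -> R[i]) : Prop :=
  forall e : R, 0 < e -> exists N : nat, forall k : nat, (N <= k)%N -> `|u k| < e%:C.

Definition form_cauchy (u : sform) (f : nat -> svec) : Prop :=
  forall e : R, 0 < e -> exists N : nat, forall k l : nat, (N <= k)%N -> (N <= l)%N ->
    `|u (f k - f l) (f k - f l)| < e%:C.

Definition abs_cont (u w : sform) : Prop :=
  forall f : nat -> svec,
    cvg0 (fun k => w (f k) (f k)) -> form_cauchy u f -> cvg0 (fun k => u (f k) (f k)).

Definition singular (u w : sform) : Prop :=
  forall f : svec, exists fs : nat -> svec,
    cvg0 (fun k => w (fs k) (fs k)) /\ cvg0 (fun k => u (f - fs k) (f - fs k)).

Definition in_Ml (t s1 : sform) : Prop :=
  sesquilinear s1 /\ nonneg_form s1 /\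
  exists s2 : sform, sesquilinear s2 /\ nonneg_form s2 /\
    forall f g : svec, `|t f g| <= sqrtC (s1 f f) * sqrtC (s2 g g).

Definition left_regular (t w : sform) : Prop :=
  exists s1 : sform, in_Ml t s1 /\ abs_cont s1 w.

Definition left_strongly_singular (t w : sform) : Prop :=
  exists s1 : sform, in_Ml t s1 /\ singular s1 w.

Definition left_bounded (t w : sform) : Prop :=
  exists c : R, 0 < c /\ in_Ml t (fun f g => c%:C * w f g).

End Forms.

(* Main.v *)
Require Import Defs.
From mathcomp Require Import all_boot all_order all_algebra.
From mathcomp Require Import reals complex.
From mathcomp Require Import ring lra.
Set Implicit Arguments. Unset Strict Implicit. Unset Printing Implicit Defensive.
Import Order.TTheory GRing.Theory Num.Theory.
Local Open Scope ring_scope.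

Section S.
Variables (R : realType) (n : nat).
Local Open Scope complex_scope.
Local Open Scope ring_scope.
Local Notation C := R[i].
Local Notation V := (svec R n).
Implicit Types (s t w : sform R n) (f g : V).

Lemma s0l s : sesquilinear s -> forall z, s 0 z = 0.
Proof.
case=> H _ z; have E := H 1 0 0 z; rewrite scale1r addr0 mul1r in E.
by apply: (@addrI _ (s 0 z)); rewrite addr0 -E.
Qed.
Lemma sDl s : sesquilinear s -> forall x y z, s (x + y) z = s x z + s y z.
Proof. by case=> H _ x y z; have := H 1 x y z; rewrite scale1r mul1r. Qed.
Lemma sZl s : sesquilinear s -> forall a x z, s (a *: x) z = a * s x z.
Proof. by move=> Hs a x z; have := (proj1 Hs) a x 0 z; rewrite addr0 s0l // addr0. Qed.
Lemma s0r s : sesquilinear s -> forall z, s z 0 = 0.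
Proof.
case=> _ H z; have E := H 1 z 0 0; rewrite scale1r addr0 conjC1 mul1r in E.
by apply: (@addrI _ (s z 0)); rewrite addr0 -E.
Qed.
Lemma sDr s : sesquilinear s -> forall x y z, s z (x + y) = s z x + s z y.
Proof. by case=> _ H x y z; have := H 1 z x y; rewrite scale1r conjC1 mul1r. Qed.
Lemma sZr s : sesquilinear s -> forall a x z, s z (a *: x) = a^* * s z x.
Proof. by move=> Hs a x z; have := (proj2 Hs) a z x 0; rewrite addr0 s0r // addr0. Qed.
Lemma sNl s : sesquilinear s -> forall x z, s (- x) z = - s x z.
Proof. by move=> Hs x z; rewrite -scaleN1r sZl // mulN1r. Qed.
Lemma sNr s : sesquilinear s -> forall x z, s z (- x) = - s z x.
Proof. by move=> Hs x z; rewrite -scaleN1r sZr // rmorphN1 mulN1r. Qed.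
Lemma sBl s : sesquilinear s -> forall x y z, s (x - y) z = s x z - s y z.
Proof. by move=> Hs x y z; rewrite sDl // sNl. Qed.
Lemma sBr s : sesquilinear s -> forall x y z, s z (x - y) = s z x - s z y.
Proof. by move=> Hs x y z; rewrite sDr // sNr. Qed.

Lemma sSl s : sesquilinear s -> forall (F : 'I_n -> V) z,
  s (\sum_i F i) z = \sum_i s (F i) z.
Proof.
move=> Hs F z; apply: (big_rec2 (fun a b => s a z = b)); first exact: s0l.
by move=> i a b _ <-; rewrite sDl.
Qed.
Lemma sSr s : sesquilinear s -> forall (F : 'I_n -> V) z,
  s z (\sum_i F i) = \sum_i s z (F i).
Proof.
move=> Hs F z; apply: (big_rec2 (fun a b => s z a = b)); first exact: s0r.
by move=> i a b _ <-; rewrite sDr.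
Qed.

Definition ev (i : 'I_n) : V := delta_mx i 0.

Lemma vexp f : f = \sum_i f i 0 *: ev i.
Proof.
apply/colP => j; rewrite summxE (bigD1 j) //= big1 ?addr0.
  by rewrite !mxE !eqxx mulr1.
by move=> i /negbTE ij; rewrite !mxE eq_sym ij mulr0.
Qed.

Lemma LA s : sesquilinear s -> forall f g, s f g = \sum_j (g j 0)^* * s f (ev j).
Proof.
move=> Hs f g; rewrite {1}[g]vexp sSr //; apply: eq_bigr => j _; by rewrite sZr.
Qed.

Definition Mf s : 'M[C]_n := \matrix_(j, i) s (ev i) (ev j).

Lemma LB s : sesquilinear s -> forall f j, (Mf s *m f) j 0 = s f (ev j).
Proof.
move=> Hs f j; rewrite mxE {2}[f]vexp sSl //; apply: eq_bigr => i _.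
by rewrite sZl // mxE mulrC.
Qed.

Lemma LK s : sesquilinear s -> forall f, in_ker s f <-> Mf s *m f = 0.
Proof.
move=> Hs f; split.
  by move=> H; apply/colP => j; rewrite LB // H mxE.
move=> H g; rewrite LA //; apply: big1 => j _.
by rewrite -(LB Hs) H mxE mulr0.
Qed.

Lemma LKmat m (A : 'M[C]_(m, n)) (M : 'M[C]_n) :
  (forall f : V, M *m f = 0 -> A *m f = 0) -> exists X, A = X *m M.
Proof.
move=> H; apply/submxP.
rewrite submxE.
idtac.
apply/eqP; apply/matrixP => i j.
have E : (A *m cokermx M) i j = col j (A *m cokermx M) i 0.
  by rewrite [RHS]mxE.
rewrite E.
rewrite colE -mulmxA H ?mxE //.
by rewrite mulmxA mulmx_coker mul0mx.
Qed.


Lemma ge0_conj (z : C) : 0 <= z -> z^* = z.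
Proof. by move=> h; apply: conj_Creal; apply: ger0_real. Qed.

Lemma herm s : sesquilinear s -> nonneg_form s -> forall f g, s g f = (s f g)^*.
Proof.
move=> Hs Hp f g.
have ca := ge0_conj (Hp f); have cb := ge0_conj (Hp g).
have r1 := ge0_conj (Hp (f + g)).
rewrite !sDl // !sDr // !rmorphD /= ca cb in r1.
have r2 := ge0_conj (Hp (f + 'i *: g)).
rewrite !sDl // !sDr // !sZl // !sZr // !rmorphD !rmorphM /= conjCi ca cb ?rmorphN /= ?conjCi ?opprK in r2.
have h1 : (s f g)^* + (s g f)^* - s f g - s g f
   = (s f f + (s f g)^* + ((s g f)^* + s g g)) - (s f f + s f g + (s g f + s g g)) by ring.
rewrite r1 subrr in h1.
set L := (X in X = _) in r2; set Rr := (X in _ = X) in r2.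
have h2 : 'i * ((s f g)^* - (s g f)^* + s f g - s g f) = L - Rr.
  rewrite /L /Rr; ring.
rewrite r2 subrr in h2.
have h3 : 2 * ((s f g)^* - s g f) = 0.
  have -> : 2 * ((s f g)^* - s g f) =
     ((s f g)^* + (s g f)^* - s f g - s g f)
     - 'i * ('i * ((s f g)^* - (s g f)^* + s f g - s g f))
     + ('i * 'i + 1) * ((s f g)^* - (s g f)^* + s f g - s g f) by ring.
  by rewrite h1 h2 mulCii addNr !mul0r mulr0 subr0 addr0.
by move/eqP: h3; rewrite mulf_eq0 pnatr_eq0 /= subr_eq0 => /eqP ->.
Qed.


Lemma CS2 s : sesquilinear s -> nonneg_form s -> forall f g,
  `|s f g| ^+ 2 <= s f f * s g g.
Proof.
move=> Hs Hp f g; rewrite normCK.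
have key : forall l, s (f - l *: g) (f - l *: g)
   = s f f - l^* * s f g - l * (s f g)^* + l * l^* * s g g.
  move=> l; rewrite !sBl // !sBr // !sZl // !sZr // (herm Hs Hp f g); ring.
have ca := ge0_conj (Hp f); have cb := ge0_conj (Hp g).
have := Hp g; rewrite le_eqVlt => /orP[/eqP b0 | bpos].
  rewrite -b0 mulr0.
  have [x0|xn0] := eqVneq (s f g) 0; first by rewrite x0 mul0r.
  have nz : s f g * (s f g)^* != 0 by rewrite mul_conjC_eq0.
  have := Hp (f - (s f g * (s f f + 1) / (2 * (s f g * (s f g)^*))) *: g).
  rewrite key -b0 mulr0 addr0 !rmorphM /= !fmorphV /= !rmorphM /= !rmorphD /= ca
     conjCK ?rmorph1 ?rmorph_nat.
  have -> : s f f - (s f g)^* * (s f f + 1) / ((1 + 1) * ((s f g)^* * s f g)) * s f g -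
    s f g * (s f f + 1) / (2 * (s f g * (s f g)^*)) * (s f g)^* = -1.
    by field; rewrite /= conjC_eq0 xn0.
  by move=> h; have := lt_le_trans (@ltrN10 C) h; rewrite ltxx.
have bn0 : s g g != 0 by rewrite gt_eqF.
have := Hp (f - (s f g / s g g) *: g).
rewrite key !rmorphM /= !fmorphV /= cb.
have -> : s f f - (s f g)^* / s g g * s f g - s f g / s g g * (s f g)^* +
    s f g / s g g * ((s f g)^* / s g g) * s g g
    = s f f - s f g * (s f g)^* / s g g by field.
by rewrite subr_ge0 ler_pdivrMr.
Qed.

Lemma CS s : sesquilinear s -> nonneg_form s -> forall f g,
  `|s f g| <= sqrtC (s f f) * sqrtC (s g g).
Proof.
move=> Hs Hp f g.
rewrite -sqrtCM ?nnegrE ?Hp // -(sqrCK (normr_ge0 (s f g))) ler_sqrtC ?nnegrE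
  ?CS2 ?exprn_ge0 ?mulr_ge0 ?Hp //.
Qed.


Definition ip : sform R n := fun x y => \sum_j x j 0 * (y j 0)^*.

Lemma ip_sesq : sesquilinear ip.
Proof.
split=> a x y z; rewrite /ip mulr_sumr -big_split; apply: eq_bigr => j _;
  rewrite !mxE /= ?rmorphD ?rmorphM /=; ring.
Qed.

Lemma ip_nonneg : nonneg_form ip.
Proof. by move=> f; apply: sumr_ge0 => j _; apply: mul_conjC_ge0. Qed.

Lemma comp_sesq s (Y : 'M[C]_n) : sesquilinear s ->
  sesquilinear (fun f g => s (Y *m f) (Y *m g)).
Proof.
move=> Hs; split=> a x y z /=; rewrite mulmxDr -scalemxAr.
  exact: (proj1 Hs).
exact: (proj2 Hs).
Qed.

Lemma comp_nonneg s (Y : 'M[C]_n) : nonneg_form s ->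
  nonneg_form (fun f g => s (Y *m f) (Y *m g)).
Proof. by move=> Hp f; apply: Hp. Qed.

Lemma scale_sesq s (k : C) : sesquilinear s -> sesquilinear (fun f g => k * s f g).
Proof.
move=> Hs; split=> a x y z /=.
  by rewrite (proj1 Hs) mulrDr mulrCA.
by rewrite (proj2 Hs) mulrDr mulrCA.
Qed.

Lemma t_ip s : sesquilinear s -> forall f g, s f g = ip (Mf s *m f) g.
Proof.
move=> Hs f g; rewrite (LA Hs) /ip; apply: eq_bigr => j _.
by rewrite LB // mulrC.
Qed.

Lemma repr s (x : 'rV[C]_n) f : sesquilinear s ->
  ((x *m Mf s) *m f) 0 0 = s f (\col_j (x 0 j)^*).
Proof.
move=> Hs; rewrite -mulmxA mxE (LA Hs f); apply: eq_bigr => j _.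
by rewrite LB // mxE conjCK.
Qed.

Lemma tw_repr t w (X : 'M[C]_n) : sesquilinear t -> sesquilinear w ->
  Mf t = X *m Mf w ->
  forall f g, t f g = w f ((\matrix_(j, k) (X k j)^*) *m g).
Proof.
move=> Ht Hw HX f g; rewrite (LA Ht) (LA Hw).
under eq_bigr => k _ do rewrite -(LB Ht) HX -mulmxA mxE mulr_sumr.
rewrite exchange_big /=; apply: eq_bigr => j _.
rewrite (LB Hw) mxE rmorph_sum /= mulr_suml; apply: eq_bigr => k _.
by rewrite !mxE rmorphM /= conjCK; ring.
Qed.

Lemma zeroC : (0 : C) = (0 : R)%:C. Proof. by []. Qed.
Lemma oneC : (1 : C) = (1 : R)%:C. Proof. by []. Qed.

Lemma cvg0_const0 : cvg0 (fun _ : nat => (0 : C)).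
Proof. by move=> e e0; exists 0%N => k _; rewrite normr0 zeroC ltcR. Qed.

Lemma cvg0_eq0 (z : C) : cvg0 (fun _ => z) -> z = 0.
Proof.
move=> H; have := normc_def z; set r := Num.sqrt _ => Ez.
have [r0|] := ltrP 0 r.
  by have [N /(_ N (leqnn N))] := H r r0; rewrite Ez ltxx.
by move=> rle; apply/eqP; rewrite -normr_le0 Ez zeroC lecR.
Qed.


Lemma partA t w : left_bounded t w -> left_regular t w.
Proof.
move=> [c [c0 HM]]; exists (fun f g => c%:C * w f g); split => // fs h1 _ e e0.
have [N HN] := h1 (e / c) (divr_gt0 e0 c0); exists N => k /HN hk.
have cC : 0 < c%:C by rewrite zeroC ltcR.
rewrite normrM (gtr0_norm cC).
have -> : e%:C = c%:C * (e / c)%:C by rewrite -rmorphM /= mulrC divfK ?gt_eqF.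
by rewrite ltr_pM2l.
Qed.

Lemma partB t w : sesquilinear w -> left_regular t w ->
  forall f, in_ker w f -> in_ker t f.
Proof.
move=> Hw [s1 [[Hs1 [Hp1 [s2 [Hs2 [Hp2 Hb]]]]] Hac]] f Hf g.
have s0 : s1 f f = 0.
  apply: cvg0_eq0; apply: (Hac (fun _ => f)).
    by rewrite /= (Hf f); exact: cvg0_const0.
  by move=> e e0; exists 0%N => k l _ _; rewrite subrr s0l // normr0 zeroC ltcR.
apply/eqP; rewrite -normr_le0; have := Hb f g; by rewrite s0 sqrtC0 mul0r.
Qed.

Lemma partC t w : sesquilinear t -> sesquilinear w -> nonneg_form w ->
  (forall f, in_ker w f -> in_ker t f) -> left_bounded t w.
Proof.
move=> Ht Hw Hpw Hk.
have [X HX] : exists X, Mf t = X *m Mf w.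
  apply: LKmat => f /(LK Hw f).2 /Hk /(LK Ht f).1; done.
exists 1; split; first exact: ltr01.
rewrite -oneC; split; first exact: scale_sesq.
split; first by move=> f /=; rewrite mul1r.
exists (fun g h => w ((\matrix_(j, k) (X k j)^*) *m g) ((\matrix_(j, k) (X k j)^*) *m h)).
split; first exact: comp_sesq.
split; first exact: comp_nonneg.
move=> f g; rewrite mul1r (tw_repr Ht Hw HX); exact: CS.
Qed.

Lemma partD t w : sesquilinear t -> sesquilinear w ->
  (forall h : V, exists f g : V, in_ker w f /\ in_ker t g /\ h = f + g) ->
  left_strongly_singular t w.
Proof.
move=> Ht Hw Hdec.
exists (fun f f' => ip (Mf t *m f) (Mf t *m f')); split.
  split; first exact: comp_sesq ip_sesq.
  split; first exact: comp_nonneg ip_nonneg.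
  exists ip; split; first exact: ip_sesq.
  split; first exact: ip_nonneg.
  by move=> f g; rewrite (t_ip Ht); apply: CS; [exact: ip_sesq | exact: ip_nonneg].
move=> h; have [a [b [Ha [Hb ->]]]] := Hdec h.
exists (fun _ => a); split.
  by rewrite (Ha a); exact: cvg0_const0.
have -> : a + b - a = b by rewrite (addrC a b) addrK.
by rewrite (proj1 (LK Ht b) Hb) (s0l ip_sesq); exact: cvg0_const0.
Qed.


Lemma par_id (p q : C) : 2 * (p * p^*) + 2 * (q * q^*) =
 (p + q) * (p^* + q^*) + (p - q) * (p^* - q^*).
Proof. ring. Qed.

Lemma lin_id (e u v : R) : 2 * (e * u) + 2 * (e * v) = e * (2 * (u + v) + 2) - 2 * e.
Proof. ring. Qed.

Lemma partE t w : sesquilinear t -> sesquilinear w -> nonneg_form w ->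
  left_strongly_singular t w ->
  forall h : V, exists f g : V, in_ker w f /\ in_ker t g /\ h = f + g.
Proof.
move=> Ht Hw Hpw [s1 [[Hs1 [Hp1 [s2 [Hs2 [Hp2 Hb]]]]] Hsing]] h.
have kt : forall g, in_ker s1 g -> in_ker t g.
  move=> g Hg x; apply/eqP; rewrite -normr_le0; have := Hb g x.
  by rewrite (Hg g) sqrtC0 mul0r.
set M := (kermx (Mf w)^T + kermx (Mf s1)^T)%MS.
have [sub|nsub] := boolP (h^T <= M)%MS.
  case/sub_addsmxP: sub => [[u v]] /= Eh.
  exists (u *m kermx (Mf w)^T)^T, (v *m kermx (Mf s1)^T)^T; split; [|split].
  - apply/(LK Hw).
    by apply: trmx_inj; rewrite trmx_mul trmxK trmx0 -mulmxA mulmx_ker mulmx0.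
  - apply: kt; apply/(LK Hs1).
    by apply: trmx_inj; rewrite trmx_mul trmxK trmx0 -mulmxA mulmx_ker mulmx0.
  - by rewrite -[h]trmxK Eh linearD.
exfalso.
have [j Hj] : exists j, (h^T *m cokermx M) 0 j != 0.
  case: (pickP (fun j => (h^T *m cokermx M) 0 j != 0)) => [j Hj|H0].
    by exists j.
  move: nsub; rewrite submxE => /negP; case; apply/eqP/rowP => j.
  rewrite [RHS]mxE; apply/eqP; exact: negbFE (H0 j).
set c := col j (cokermx M).
set al := (h^T *m c) 0 0.
have al0 : al != 0 by rewrite /al /c colE mulmxA -colE mxE.
set r := al^-1 *: c^T.
have annih : forall (S : 'M[C]_n), (kermx S^T <= M)%MS ->
    forall f : V, S *m f = 0 -> r *m f = 0.
  move=> S SM f Sf.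
  have : (f^T <= M)%MS.
    by apply: submx_trans SM; apply/sub_kermxP; rewrite -trmx_mul Sf trmx0.
  rewrite submxE => /eqP fc.
  have fc' : f^T *m c = 0 by rewrite /c colE mulmxA fc mul0mx.
  rewrite /r -scalemxAl.
  have -> : c^T *m f = (f^T *m c)^T by rewrite trmx_mul trmxK.
  by rewrite fc' trmx0 scaler0.
have [xw Exw] := LKmat (annih _ (addsmxSl _ _)).
have [xs Exs] := LKmat (annih _ (addsmxSr _ _)).
have phiw : forall f, (r *m f) 0 0 = w f (\col_j (xw 0 j)^*).
  by move=> f; rewrite Exw repr.
have phis : forall f, (r *m f) 0 0 = s1 f (\col_j (xs 0 j)^*).
  by move=> f; rewrite Exs repr.
have phih : (r *m h) 0 0 = 1.
  rewrite /r -scalemxAl.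
  have -> : c^T *m h = (h^T *m c)^T by rewrite trmx_mul trmxK.
  by rewrite mxE mxE -/al mulVf.
set A := w (\col_j (xw 0 j)^*) (\col_j (xw 0 j)^*).
set B := s1 (\col_j (xs 0 j)^*) (\col_j (xs 0 j)^*).
have A0 : 0 <= A := Hpw _.
have B0 : 0 <= B := Hp1 _.
have EA : ((complex.Re A : R)%:C : R[i]) = A := RRe_real (ger0_real A0).
have EB : ((complex.Re B : R)%:C : R[i]) = B := RRe_real (ger0_real B0).
have a0 : 0 <= complex.Re A by rewrite -lecR EA.
have b0 : 0 <= complex.Re B by rewrite -lecR EB.
set e := (2 * (complex.Re A + complex.Re B) + 2)^-1.
have den0 : 0 < 2 * (complex.Re A + complex.Re B) + 2.
  by rewrite ltr_wpDl ?mulr_ge0 ?addr_ge0.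
have e0 : 0 < e by rewrite invr_gt0.
have He : e * (2 * (complex.Re A + complex.Re B) + 2) = 1 by rewrite mulVf ?gt_eqF.
have [fs [c1 c2]] := Hsing h.
have [N1 H1] := c1 e e0; have [N2 H2] := c2 e e0.
have hk1 := H1 (maxn N1 N2) (leq_maxl _ _).
have hk2 := H2 (maxn N1 N2) (leq_maxr _ _).
set k := maxn N1 N2 in hk1 hk2.
set p := w (fs k) (\col_j (xw 0 j)^*).
set q := s1 (h - fs k) (\col_j (xs 0 j)^*).
have pq : p + q = 1.
  rewrite /p /q -phiw -phis -phih.
  have E : r *m h = r *m fs k + r *m (h - fs k) by rewrite -mulmxDr addrC subrK.
  by rewrite E [in RHS]mxE.
have hp : `|p| ^+ 2 <= e%:C * A.
  apply: le_trans (CS2 Hw Hpw _ _) _; apply: ler_wpM2r => //.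
  by apply: ltW; rewrite -(ger0_norm (Hpw (fs k))).
have hq : `|q| ^+ 2 <= e%:C * B.
  apply: le_trans (CS2 Hs1 Hp1 _ _) _; apply: ler_wpM2r => //.
  by apply: ltW; rewrite -(ger0_norm (Hp1 (h - fs k))).
have par : 1 <= 2 * `|p| ^+ 2 + 2 * `|q| ^+ 2.
  have E : 2 * `|p| ^+ 2 + 2 * `|q| ^+ 2 = (p + q) * (p + q)^* + (p - q) * (p - q)^*.
    by rewrite !normCK !rmorphD !rmorphN /=; apply: par_id.
  by rewrite E pq rmorph1 mulr1 lerDl mul_conjC_ge0.
have fin : 2 * `|p| ^+ 2 + 2 * `|q| ^+ 2 <= (2 * (e * complex.Re A) + 2 * (e * complex.Re B))%:C.
  rewrite !rmorphD !rmorphM /= rmorph_nat EA EB.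
  by apply: lerD; apply: ler_wpM2l => //; rewrite ler0n.
have : (2 * (e * complex.Re A) + 2 * (e * complex.Re B)) < 1.
  have : 0 < 2 * e by rewrite mulr_gt0.
  move: He; set u := complex.Re A; set v := complex.Re B => He' h2e.
  have -> : 2 * (e * u) + 2 * (e * v) = 1 - 2 * e.
    by rewrite lin_id He'.
  by rewrite ltrBlDr ltrDl.
rewrite -ltcR -oneC => lt1.
by have := le_lt_trans (le_trans par fin) lt1; rewrite ltxx.
Qed.

End S.

Theorem mainTheorem3 (R : realType) (n : nat) (t w : sform R n) :
  sesquilinear t -> sesquilinear w -> nonneg_form w ->
  (((left_bounded t w <-> left_regular t w) /\
    (left_regular t w <-> (forall f : svec R n, in_ker w f -> in_ker t f))) /\
   (left_strongly_singular t w <->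
    (forall h : svec R n, exists f g : svec R n, in_ker w f /\ in_ker t g /\ h = f + g))).
Proof.
move=> Ht Hw Hpw; split; [split|split].
- split; first exact: partA.
  by move=> Hr; apply: partC => //; apply: partB Hr.
- split; first exact: partB.
  by move=> Hk; apply: partA; apply: partC.
- exact: partE.
- exact: partD.
Qed.
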